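(* Let $\mathbf{CMet}$ be the category of complete generalized metric spaces and nonexpanding maps, enriched over itself. For every $\delta>0$, the hom-functor $\mathbf{CMet}(2_\delta,-)\colon\mathbf{CMet}\to\mathbf{CMet}$ preserves directed colimits of diagrams consisting of convex complete metric spaces and isometries; that is, if $k_i\colon K_i\to K$ ($i\in I$) is a colimit in $\mathbf{CMet}$ of a directed diagram of convex spaces $K_i$ and isometries, then the canonical map $\operatorname{colim}_i\mathbf{CMet}(2_\delta,K_i)\to\mathbf{CMet}(2_\delta,K)$ is an isomorphism in $\mathbf{CMet}$.
   Context: A generalized metric space allows distance $\infty$; morphisms of $\mathbf{CMet}$ are nonexpanding maps $f$ ($d(fx,fy)\le d(x,y)$). The internal hom $\mathbf{CMet}(A,B)$ is the set of nonexpanding maps with the supremum metric $d(f,g)=\sup_x d(fx,gx)$. For $\delta>0$, $2_\delta$ is the two-point metric space whose points are at distance $\delta$. A metric space is convex if for any points $x,y$ there is $z$ with $d(x,z)+d(z,y)=d(x,y)$. A directed colimit of isometries in $\mathbf{CMet}$ is the completion of the union (directed colimit in metric spaces) of the diagram. *)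

(* Defs.v *)
From HB Require Import structures.
From mathcomp Require Import all_boot all_order all_algebra.
From mathcomp Require Import all_classical all_reals ereal.
Set Implicit Arguments. Unset Strict Implicit. Unset Printing Implicit Defensive.
Import Order.TTheory GRing.Theory Num.Theory.
Local Open Scope classical_set_scope.
Local Open Scope ring_scope.
Local Open Scope ereal_scope.

Record MetSp (R : realType) := MkMetSp {
  car :> Type;
  dist : car -> car -> \bar R }.
Arguments dist {R} m _ _.

Section Defs.
Variable R : realType.

Definition gen_metric (X : MetSp R) : Prop :=
  [/\ forall x y : X, 0 <= dist X x y,
      forall x : X, dist X x x = 0,
      forall x y : X, dist X x y = 0 -> x = y,
      forall x y : X, dist X x y = dist X y x &
      forall x y z : X, dist X x z <= dist X x y + dist X y z].

Definition cauchy_seq (X : MetSp R) (u : nat -> X) : Prop :=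
  forall e : R, (0 < e)%R -> exists N : nat, forall m n : nat,
    (N <= m)%N -> (N <= n)%N -> dist X (u m) (u n) < e%:E.

Definition converges_to (X : MetSp R) (u : nat -> X) (l : X) : Prop :=
  forall e : R, (0 < e)%R -> exists N : nat, forall n : nat,
    (N <= n)%N -> dist X (u n) l < e%:E.

Definition complete_sp (X : MetSp R) : Prop :=
  forall u : nat -> X, cauchy_seq u -> exists l : X, converges_to u l.

Definition cmet (X : MetSp R) : Prop := gen_metric X /\ complete_sp X.

Definition nonexp (X Y : MetSp R) (f : X -> Y) : Prop :=
  forall x y : X, dist Y (f x) (f y) <= dist X x y.

Definition isometric (X Y : MetSp R) (f : X -> Y) : Prop :=
  forall x y : X, dist Y (f x) (f y) = dist X x y.

(* (Menger) convexity: distinct points have a point strictly between them *)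
Definition convex (X : MetSp R) : Prop :=
  forall x y : X, x <> y ->
    exists z : X, [/\ z <> x, z <> y & dist X x z + dist X z y = dist X x y].

Lemma isometric_nonexp (X Y : MetSp R) (f : X -> Y) : isometric f -> nonexp f.
Proof. by move=> H x y; rewrite H. Qed.

Lemma nonexp_comp (X Y Z : MetSp R) (g : Y -> Z) (f : X -> Y) :
  nonexp g -> nonexp f -> nonexp (g \o f).
Proof. by move=> Hg Hf x y; apply: le_trans (Hg _ _) (Hf _ _). Qed.

Definition two_sp (delta : R) : MetSp R :=
  @MkMetSp R bool (fun x y => if x == y then 0 else delta%:E).

Definition hom_sp (A B : MetSp R) : MetSp R :=
  @MkMetSp R {f : A -> B | nonexp f}
    (fun f g => ereal_sup (range (fun x : A => dist B (sval f x) (sval g x)))).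

Definition hom_map (A B C : MetSp R) (h : B -> C) (hh : nonexp h) :
  hom_sp A B -> hom_sp A C :=
  fun f => exist _ (h \o sval f) (nonexp_comp hh (svalP f)).

Definition directed_poset (I : Type) (le : I -> I -> Prop) : Prop :=
  [/\ forall i, le i i,
      forall i j k, le i j -> le j k -> le i k,
      forall i j, le i j -> le j i -> i = j,
      inhabited I &
      forall i j, exists k, le i k /\ le j k].

Definition is_colimit (I : Type) (le : I -> I -> Prop) (D : I -> MetSp R)
  (F : forall i j, le i j -> D i -> D j) (C : MetSp R)
  (c : forall i, D i -> C) : Prop :=
  [/\ cmet C,
      forall i, nonexp (c i),
      forall i j (h : le i j) (x : D i), c j (F i j h x) = c i x &
      forall L : MetSp R, cmet L ->
      forall l : forall i, D i -> L,
        (forall i, nonexp (l i)) ->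
        (forall i j (h : le i j) (x : D i), l j (F i j h x) = l i x) ->
        exists u : C -> L,
          [/\ nonexp u,
              forall i (x : D i), u (c i x) = l i x &
              forall u' : C -> L, nonexp u' ->
                (forall i (x : D i), u' (c i x) = l i x) ->
                forall y, u' y = u y]].

End Defs.

(* Main.v *)
Require Import Defs.
From HB Require Import structures.
From mathcomp Require Import all_boot all_order all_algebra.
From mathcomp Require Import all_classical all_reals ereal.
From mathcomp Require Import lra.
Import Order.TTheory GRing.Theory Num.Theory.

Module W1.
Set Implicit Arguments. Unset Strict Implicit. Unset Printing Implicit Defensive.
Local Open Scope classical_set_scope.
Local Open Scope ring_scope.
Local Open Scope ereal_scope.

Section GM.
Variable R : realType.
Variable X : MetSp R.
Hypothesis hX : gen_metric X.
Local Notation d := (dist X).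

Lemma d_ge0 (x y : X) : 0 <= d x y. Proof. by case: hX. Qed.
Lemma d_refl (x : X) : d x x = 0. Proof. by case: hX. Qed.
Lemma d_eq0 (x y : X) : d x y = 0 -> x = y. Proof. by case: hX => _ _ H _ _; apply: H. Qed.
Lemma d_sym (x y : X) : d x y = d y x. Proof. by case: hX. Qed.
Lemma d_tri (x y z : X) : d x z <= d x y + d y z. Proof. by case: hX. Qed.

Lemma d_tri_lt (x y z : X) (a b : R) : d x y < a%:E -> d y z < b%:E -> d x z < (a + b)%:E.
Proof. move=> h1 h2; apply: le_lt_trans (d_tri x y z) _; rewrite EFinD; exact: lteD. Qed.

Lemma d_small_eq (x y : X) : (forall e : R, (0 < e)%R -> d x y <= e%:E) -> x = y.
Proof.
move=> H; apply: d_eq0; apply/eqP; rewrite eq_le d_ge0 andbT.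
apply/lee_addgt0Pr => e he; rewrite add0e; exact: H.
Qed.

Lemma d_small_eq_lt (x y : X) : (forall e : R, (0 < e)%R -> d x y < e%:E) -> x = y.
Proof. move=> H; apply: d_small_eq => e he; exact: ltW (H e he). Qed.

Lemma lim_unique (u : nat -> X) (a b : X) : converges_to u a -> converges_to u b -> a = b.
Proof.
move=> ha hb; apply: d_small_eq_lt => e he.
have he2 : (0 < e / 2)%R by rewrite divr_gt0.
case: (ha _ he2) => N1 h1; case: (hb _ he2) => N2 h2.
have h1' := h1 (maxn N1 N2) (leq_maxl _ _); rewrite d_sym in h1'.
by have := d_tri_lt h1' (h2 (maxn N1 N2) (leq_maxr _ _)); rewrite -splitr.
Qed.

End GM.

End W1.
Import W1.

Module W2.
Set Implicit Arguments. Unset Strict Implicit. Unset Printing Implicit Defensive.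
Local Open Scope classical_set_scope.
Local Open Scope ring_scope.

Lemma small_inv (R : realType) (e : R) : 0 < e -> exists N : nat, forall n, (N <= n)%N -> (n.+1%:R)^-1 < e.
Proof.
move=> he; exists (Num.Def.trunc e^-1) => n hn.
rewrite invf_plt ?posrE ?ltr0n //.
apply: lt_le_trans (truncnS_gt _) _; rewrite ler_nat; by [].
Qed.

Local Open Scope ereal_scope.

Lemma complete_approx (R : realType) (L : MetSp R) (hL : cmet L) (S : R -> set L) :
  (forall e : R, (0 < e)%R -> exists p, S e p) ->
  (forall (e e' : R) p q, (0 < e)%R -> (0 < e')%R -> S e p -> S e' q ->
      dist L p q <= (e + e')%:E) ->
  exists c, forall (e : R) p, (0 < e)%R -> S e p -> dist L p c <= e%:E.
Proof.
case: hL => hg hc hne hdiam.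
have hpos n : (0 < (n.+1%:R)^-1 :> R)%R by rewrite invr_gt0 ltr0n.
have [s hs] := choice (fun n : nat => hne _ (hpos n)).
have cs : cauchy_seq s.
  move=> e he; have he2 : (0 < e / 2)%R by rewrite divr_gt0.
  have [N hN] := small_inv he2; exists N => m n hm hn.
  apply: le_lt_trans (hdiam _ _ _ _ (hpos m) (hpos n) (hs m) (hs n)) _.
  rewrite lte_fin [X in (_ < X)%R](splitr e); exact: ltrD (hN _ hm) (hN _ hn).
have [c hcv] := hc _ cs; exists c => e p he hp.
apply/lee_addgt0Pr => eta heta; have he2 : (0 < eta / 2)%R by rewrite divr_gt0.
have [N1 h1] := small_inv he2; have [N2 h2] := hcv _ he2.
pose n := maxn N1 N2.
apply: le_trans (d_tri hg p (s n) c) _.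
rewrite [X in _ <= _ + X%:E](splitr eta) EFinD addeA; apply: leeD; last first.
  exact: ltW (h2 _ (leq_maxr _ _)).
apply: le_trans (hdiam _ _ _ _ he (hpos n) hp (hs n)) _.
rewrite EFinD lee_fin; apply: lerD => //; exact: ltW (h1 _ (leq_maxl _ _)).
Qed.

End W2.
Import W2.

Module W3.
Set Implicit Arguments. Unset Strict Implicit. Unset Printing Implicit Defensive.
Local Open Scope classical_set_scope.
Local Open Scope ring_scope.
Local Open Scope ereal_scope.

Lemma hd_ub (R : realType) (A B : MetSp R) (f g : hom_sp A B) x :
  dist B (sval f x) (sval g x) <= dist (hom_sp A B) f g.
Proof. by apply: ereal_sup_ubound; exists x. Qed.

Lemma hd_le (R : realType) (A B : MetSp R) (f g : hom_sp A B) c :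
  (forall x, dist B (sval f x) (sval g x) <= c) -> dist (hom_sp A B) f g <= c.
Proof. by move=> h; apply: ge_ereal_sup => _ [x _ <-]. Qed.

Lemma hom_eq (R : realType) (A B : MetSp R) (f g : hom_sp A B) :
  (forall x, sval f x = sval g x) -> f = g.
Proof.
case: f g => f hf [g hg] /= h.
have e : f = g by apply: funext.
subst g; congr exist; exact: Prop_irrelevance.
Qed.

Lemma hom_map_nonexp (R : realType) (A B C : MetSp R) (h : B -> C) (hh : nonexp h) :
  nonexp (hom_map (A:=A) hh).
Proof.
move=> f g; apply: hd_le => x /=; apply: le_trans (hh _ _) _; exact: hd_ub.
Qed.

Lemma hom_map_iso (R : realType) (A B C : MetSp R) (h : B -> C) (hh : nonexp h) :
  isometric h -> isometric (hom_map (A:=A) hh).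
Proof.
move=> hi f g; apply/eqP; rewrite eq_le; apply/andP; split.
  exact: hom_map_nonexp.
apply: hd_le => x; rewrite -hi; exact: (hd_ub (hom_map hh f) (hom_map hh g) x).
Qed.

Lemma hd_lt2 (R : realType) (delta : R) (B : MetSp R) (f g : hom_sp (two_sp delta) B) c :
  dist B (sval f true) (sval g true) < c -> dist B (sval f false) (sval g false) < c ->
  dist (hom_sp (two_sp delta) B) f g < c.
Proof.
move=> h1 h2.
case: (leP (dist B (sval f true) (sval g true)) (dist B (sval f false) (sval g false))) => hc.
  apply: le_lt_trans h2; apply: hd_le => -[] //.
apply: le_lt_trans h1; apply: hd_le => -[] //; exact: ltW.
Qed.

Section Hom.
Variable R : realType.
Variable delta : R.
Variable B : MetSp R.
Local Notation H := (hom_sp (two_sp delta) B).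
Hypothesis hB : gen_metric B.

Lemma hom_gen : gen_metric H.
Proof.
split.
- move=> f g; exact: le_trans (d_ge0 hB (sval f true) (sval g true)) (hd_ub _ _ _).
- move=> f; apply/eqP; rewrite eq_le; apply/andP; split; last first.
    exact: le_trans (d_ge0 hB (sval f true) (sval f true)) (hd_ub _ _ _).
  by apply: hd_le => x; rewrite d_refl.
- move=> f g h0; apply: hom_eq => x; apply: (d_eq0 hB); apply/eqP; rewrite eq_le d_ge0 // andbT.
  by rewrite -h0; apply: hd_ub.
- have hs (f g : H) : dist H f g <= dist H g f.
    by apply: hd_le => x; rewrite d_sym //; apply: hd_ub.
  by move=> f g; apply/eqP; rewrite eq_le !hs.
- move=> f g h; apply: hd_le => x; apply: le_trans (d_tri hB _ (sval g x) _) _.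
  apply: leeD; exact: hd_ub.
Qed.

Lemma two_nonexp_mk (a b : B) : dist B a b <= delta%:E ->
  nonexp (X:=two_sp delta) (fun x : bool => if x then a else b).
Proof.
move=> hab [] [] /=; rewrite ?d_refl //; rewrite d_sym //.
Qed.

End Hom.

Lemma hom_pair_le (R : realType) (delta : R) (B : MetSp R) (f : hom_sp (two_sp delta) B) :
  dist B (sval f true) (sval f false) <= delta%:E.
Proof. exact: (svalP f true false). Qed.

Lemma hom_complete (R : realType) (delta : R) (B : MetSp R) :
  cmet B -> complete_sp (hom_sp (two_sp delta) B).
Proof.
case=> hg hc u hu.
have hcx (x : bool) : cauchy_seq (fun n => sval (u n) x).
  move=> e he; have [N hN] := hu e he; exists N => m n hm hn.
  exact: (le_lt_trans (hd_ub (u m) (u n) x) (hN _ _ hm hn)).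
have [F hF] := choice (fun x => hc _ (hcx x)).
have hFn : nonexp (X:=two_sp delta) F.
  move=> x y; apply/lee_addgt0Pr => e he.
  have he2 : (0 < e / 2)%R by rewrite divr_gt0.
  have [N1 h1] := hF x _ he2; have [N2 h2] := hF y _ he2.
  pose n := maxn N1 N2.
  apply: le_trans (d_tri hg _ (sval (u n) x) _) _.
  apply: le_trans (leeD (lexx _) (d_tri hg _ (sval (u n) y) _)) _.
  have a1 := h1 n (leq_maxl _ _); rewrite d_sym // in a1.
  have a2 := h2 n (leq_maxr _ _).
  rewrite [X in _ <= _ + X%:E](splitr e) EFinD addeCA.
  apply: leeD; first exact: ltW.
  apply: leeD; last exact: ltW.
  exact: (svalP (u n) x y).
exists (exist _ F hFn) => e he.
have he2 : (0 < e / 2)%R by rewrite divr_gt0.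
have [N1 h1] := hF true _ he2; have [N2 h2] := hF false _ he2.
exists (maxn N1 N2) => n hn; apply: hd_lt2 => /=.
  apply: lt_trans (h1 n (leq_trans (leq_maxl _ _) hn)) _; rewrite lte_fin ltr_pdivrMr // ltr_pMr //.
  by rewrite ltr1n.
apply: lt_trans (h2 n (leq_trans (leq_maxr _ _) hn)) _; rewrite lte_fin ltr_pdivrMr // ltr_pMr //.
by rewrite ltr1n.
Qed.

End W3.
Import W3.

Module W4.
Set Implicit Arguments. Unset Strict Implicit. Unset Printing Implicit Defensive.
Local Open Scope classical_set_scope.
Local Open Scope ring_scope.

Lemma real_cauchy (R : realType) (w : nat -> R) :
  (forall e : R, 0 < e -> exists N, forall m n, (N <= m)%N -> (N <= n)%N -> `|w m - w n| < e) ->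
  exists l, forall e : R, 0 < e -> exists N, forall n, (N <= n)%N -> `|w n - l| < e.
Proof.
move=> hw.
pose a n := ereal_inf [set (w m)%:E | m in [set m | (n <= m)%N]].
pose Lx := ereal_sup (range a).
have key e N : 0 < e -> (forall m n, (N <= m)%N -> (N <= n)%N -> `|w m - w n| < e) ->
    ((w N - e)%:E <= Lx /\ Lx <= (w N + e)%:E)%E.
  move=> he hN; split.
    apply: (le_trans _ (ereal_sup_ubound (ex_intro2 _ _ N I erefl))).
    apply/ereal_infP => _ [m hm <-]; rewrite lee_fin.
    have := hN m N hm (leqnn N); rewrite ltr_norml => /andP[h1 _].
    lra.
  apply/ereal_supP => _ [n _ <-].
  apply: (le_trans (ereal_inf_lbound (ex_intro2 _ _ (maxn n N) (leq_maxl n N) erefl))).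
  have := hN (maxn n N) N (leq_maxr _ _) (leqnn N); rewrite ltr_norml => /andP[_ h2].
  rewrite lee_fin; lra.
have [N1 h1] := hw 1 ltr01.
have [k1 k2] := key 1 N1 ltr01 h1.
have fL : Lx \is a fin_num.
  by rewrite fin_numE; apply/andP; split; [apply/eqP => E; move: k1; rewrite E | apply/eqP => E; move: k2; rewrite E].
exists (fine Lx) => e he.
have he2 : 0 < e / 2 by rewrite divr_gt0.
have [N hN] := hw _ he2; have [j1 j2] := key _ N he2 hN.
exists N => n hn.
have := hN n N hn (leqnn N); rewrite -(fineK fL) !lee_fin in j1 j2.
rewrite !ltr_norml => /andP[q1 q2]; apply/andP; split; lra.
Qed.

Local Open Scope ereal_scope.
Definition dE (R : realType) (a b : \bar R) : \bar R := if a == b then 0 else `|a - b|.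
Definition EMsp (R : realType) : MetSp R := @MkMetSp R (\bar R) (@dE R).

Lemma dE_fin (R : realType) (r s : R) : dE r%:E s%:E = `|r - s|%:E.
Proof. by rewrite /dE; case: eqP => [[->]|_] //; rewrite subrr normr0. Qed.

Lemma dE_ge0 (R : realType) (x y : \bar R) : 0 <= dE x y.
Proof. by rewrite /dE; case: eqP. Qed.
Lemma dE_refl (R : realType) (x : \bar R) : dE x x = 0.
Proof. by rewrite /dE eqxx. Qed.

Lemma EMsp_gen (R : realType) : gen_metric (EMsp R).
Proof.
split => /=.
- exact: dE_ge0.
- exact: dE_refl.
- move=> x y; rewrite /dE; case: eqP => // hne.
  case: x y hne => [x| |] [y| |] //= hne.
  by move=> [] /eqP; rewrite normr_eq0 subr_eq0 => /eqP ->.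
- move=> x y; rewrite /dE eq_sym; case: eqP => // _.
  by case: x y => [x| |] [y| |] //=; rewrite distrC.
- move=> x y z.
  case: (eqVneq x z) => [<-|hxz]; first by rewrite dE_refl adde_ge0 // dE_ge0.
  case: (eqVneq x y) => [<-|hxy]; first by rewrite dE_refl add0e.
  case: (eqVneq y z) => [<-|hyz]; first by rewrite dE_refl adde0.
  rewrite /dE (negbTE hxz) (negbTE hxy) (negbTE hyz).
  move: hxz hxy hyz; case: x => [x| |]; case: y => [y| |]; case: z => [z| |] //= _ _ _; rewrite ?leey //.
  rewrite -EFinD lee_fin; apply: le_trans (ler_normD _ _); by rewrite addrA subrK.
Qed.

Lemma dE_le (R : realType) (x y c : \bar R) : 0 <= c ->
  x <= y + c -> y <= x + c -> dE x y <= c.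
Proof.
rewrite /dE; case: eqP => // hne.
case: c => [c| |] // hc; last by rewrite leey.
move: hne; case: x => [x| |]; case: y => [y| |] //= hne; rewrite ?lee_fin -?EFinD ?lee_fin //.
move=> h1 h2; rewrite ler_norml; apply/andP; split; lra.
Qed.

Lemma EMsp_complete (R : realType) : complete_sp (EMsp R).
Proof.
move=> u hu; have [N hN] := hu 1%R ltr01.
have hN' n : (N <= n)%N -> dE (u n) (u N) < 1%:E by move=> hn; exact: hN n N hn (leqnn N).
case E: (u N) => [r| |]; last first.
- exists -oo => e he; exists N => n hn; have := hN' n hn; rewrite E.
  move=> h; suff -> : u n = -oo by rewrite /= dE_refl.
  by move: h; rewrite /dE; case: (u n) => [s| |] //=.
- exists +oo => e he; exists N => n hn; have := hN' n hn; rewrite E.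
  move=> h; suff -> : u n = +oo by rewrite /= dE_refl.
  by move: h; rewrite /dE; case: (u n) => [s| |] //=.
have fin n : (N <= n)%N -> u n = (fine (u n))%:E.
  move=> hn; have h0 := hN' n hn; rewrite E in h0; move: h0.
  case: (u n) => [s| |] h; [reflexivity| |]; exfalso; move: h; rewrite /dE; case: eqP => // _ /=.

pose w (n : nat) := fine (u (n + N)%N).
have hw (n : nat) : u (n + N)%N = (w n)%:E by rewrite /w; apply: fin; exact: leq_addl.
have [l hl] : exists l, forall e : R, (0 < e)%R -> exists N, forall n, (N <= n)%N -> (`|w n - l| < e)%R.
  apply: real_cauchy => e he; have [M hM] := hu e he; exists M => m n hm hn.
  have := hM (m + N)%N (n + N)%N (leq_trans hm (leq_addr _ _)) (leq_trans hn (leq_addr _ _)).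
  by rewrite /= (hw m) (hw n) dE_fin lte_fin.
exists l%:E => e he; have [M hM] := hl e he; exists (M + N)%N => n hn.
have hn' : (N <= n)%N by apply: leq_trans hn; rewrite leq_addl.
have eqn : u n = (w (n - N)%N)%:E by rewrite -hw subnK.
have hMn : (M <= n - N)%N by rewrite leq_subRL // addnC.
by rewrite /= eqn dE_fin lte_fin; apply: hM.
Qed.

Lemma EMsp_cmet (R : realType) : cmet (EMsp R).
Proof. split; [exact: EMsp_gen | exact: EMsp_complete]. Qed.

End W4.
Import W4.

Module W5.
Set Implicit Arguments. Unset Strict Implicit. Unset Printing Implicit Defensive.
Local Open Scope classical_set_scope.
Local Open Scope ring_scope.
Local Open Scope ereal_scope.

Lemma dE0 (R : realType) (a : \bar R) : 0 <= a -> dE 0 a = a.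
Proof.
rewrite /dE; case: eqP => // _; case: a => [a| |] ha; [|by []|by []].
rewrite /= sub0r normrN ger0_norm //; by rewrite -lee_fin.
Qed.

Local Unset Implicit Arguments.
Lemma sig_eq (A : Type) (P : A -> Prop) (a b : {x | P x}) : sval a = sval b -> a = b.
Proof. case: a b => a pa [b pb] /= e; subst b; congr exist; exact: Prop_irrelevance. Qed.

Section Colim.
Variables (R : realType) (I : Type) (le : I -> I -> Prop) (hI : directed_poset le).
Variables (D : I -> MetSp R) (F : forall i j, le i j -> D i -> D j).
Hypothesis hDg : forall i, gen_metric (D i).
Hypothesis hFiso : forall i j (h : le i j), isometric (F i j h).
Hypothesis hFcomp : forall i j k (hij : le i j) (hjk : le j k) (hik : le i k) (x : D i),
     F j k hjk (F i j hij x) = F i k hik x.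
Variables (K : MetSp R) (k : forall i, D i -> K).
Hypothesis hcolim : is_colimit F k.

Lemma le_trans' i j m : le i j -> le j m -> le i m.
Proof. by case: hI => _ H _ _ _; apply: H. Qed.

Lemma dir i j : exists m, le i m /\ le j m.
Proof. by case: hI. Qed.

Lemma F_pi i j (p q : le i j) x : F i j p x = F i j q x.
Proof. by rewrite (Prop_irrelevance p q). Qed.

Lemma Fdist_indep i j (x : D i) (z : D j) m m' (h1 : le i m) (h2 : le j m) (h1' : le i m') (h2' : le j m') :
  dist (D m) (F i m h1 x) (F j m h2 z) = dist (D m') (F i m' h1' x) (F j m' h2' z).
Proof.
have [M [hm hm']] := dir m m'.
rewrite -(hFiso m M hm) -(hFiso m' M hm').
rewrite (hFcomp _ _ _ h1 hm (le_trans' _ _ _ h1 hm)) (hFcomp _ _ _ h2 hm (le_trans' _ _ _ h2 hm)).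
rewrite (hFcomp _ _ _ h1' hm' (le_trans' _ _ _ h1 hm)) (hFcomp _ _ _ h2' hm' (le_trans' _ _ _ h2 hm)).
by [].
Qed.

Lemma k_compat i j (h : le i j) (x : D i) : k j (F i j h x) = k i x.
Proof. by case: hcolim. Qed.

Lemma K_cmet : cmet K.
Proof. by case: hcolim. Qed.

Lemma k_nonexp i : nonexp (k i).
Proof. by case: hcolim. Qed.

Lemma k_iso i : isometric (k i).
Proof.
move=> x y; apply/eqP; rewrite eq_le k_nonexp /=.
pose ub j := sval (cid (dir i j)).
have hub j : le i (ub j) /\ le j (ub j) := svalP (cid (dir i j)).
pose l j (z : D j) : EMsp R := dist (D (ub j)) (F i (ub j) (proj1 (hub j)) x) (F j (ub j) (proj2 (hub j)) z).
have leq j (z : D j) m (h1 : le i m) (h2 : le j m) : l j z = dist (D m) (F i m h1 x) (F j m h2 z).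
  exact: Fdist_indep.
have hl j : nonexp (l j).
  move=> z z' /=; rewrite /l; set m := ub j; set X := F i m _ x.
  rewrite -(hFiso j m (proj2 (hub j)) z z').
  apply: dE_le; first exact: d_ge0.
    apply: le_trans (d_tri (hDg m) _ (F j m (proj2 (hub j)) z') _) _.
    by rewrite (d_sym (hDg m) (F j m _ z')).
  exact: d_tri.
have hlc j j' (h : le j j') (z : D j) : l j' (F j j' h z) = l j z.
  rewrite (leq j z (ub j') (proj1 (hub j')) (le_trans' _ _ _ h (proj2 (hub j')))).
  by rewrite /l (hFcomp _ _ _ h (proj2 (hub j')) (le_trans' _ _ _ h (proj2 (hub j')))).
case: hcolim => _ _ _ U; have [u [hu hu1 _]] := U (EMsp R) (EMsp_cmet R) l hl hlc.
have E1 : l i x = 0 by rewrite /l (F_pi _ _ (proj2 (hub i)) (proj1 (hub i))) d_refl.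
have E2 : l i y = dist (D i) x y by rewrite /l (F_pi _ _ (proj2 (hub i)) (proj1 (hub i))) hFiso.
have := hu (k i x) (k i y); rewrite /= !hu1 E1 E2 dE0 //; exact: d_ge0.
Qed.

Lemma density (y : K) (e : R) : (0 < e)%R -> exists i (x : D i), dist K (k i x) y < e%:E.
Proof.
have [hKg hKc] := K_cmet.
pose P (y : K) := forall e : R, (0 < e)%R -> exists i (x : D i), dist K (k i x) y < e%:E.
pose C := @MkMetSp R {y : K | P y} (fun a b => dist K (sval a) (sval b)).
have Cg : gen_metric C.
  split => /=.
  - move=> a b; exact: d_ge0.
  - move=> a; exact: d_refl.
  - move=> a b h; apply: sig_eq; exact: d_eq0 h.
  - move=> a b; exact: d_sym.
  - move=> a b c; exact: d_tri.
have Cc : complete_sp C.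
  move=> u hu.
  have [l hl] := hKc (fun n => sval (u n)) hu.
  have Pl : P l.
    move=> e0 he0; have he2 : (0 < e0 / 2)%R by rewrite divr_gt0.
    have [N hN] := hl _ he2; have [i [x hx]] := svalP (u N) _ he2.
    exists i, x; rewrite (splitr e0); apply: d_tri_lt hx (hN N (leqnn N)) => //.
  by exists (exist P l Pl) => e0 he0; have [N hN] := hl _ he0; exists N.
have Pk i (x : D i) : P (k i x) by move=> e0 he0; exists i, x; rewrite d_refl.
pose c i (x : D i) : C := exist P (k i x) (Pk i x).
have hcn i : nonexp (c i) by move=> a b /=; exact: k_nonexp.
have hcc i j (h : le i j) (x : D i) : c j (F i j h x) = c i x by apply: sig_eq => /=; exact: k_compat.
case: hcolim => _ _ _ U.
have [r [hr hr1 _]] := U C (conj Cg Cc) c hcn hcc.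
have [u0 [_ _ hu0]] := U K K_cmet k k_nonexp k_compat.
have e1 : forall y, sval (r y) = u0 y.
  apply: hu0; first by move=> a b; exact: hr.
  by move=> i x; rewrite hr1.
have e2 : forall y, y = u0 y.
  apply: hu0 => //; by move=> a b.
move=> he; have := svalP (r y) e he; by rewrite e1 -e2.
Qed.

End Colim.
Arguments density {R I le D F K k}.
Arguments k_iso {R I le} hI {D F}.
Arguments k_compat {R I le D F K k}.
Arguments K_cmet {R I le D F K k}.
Arguments k_nonexp {R I le D F K k}.
Arguments dir {I le}.
Arguments le_trans' {I le}.

End W5.
Import W5.

Module W6.
Set Implicit Arguments. Unset Strict Implicit. Unset Printing Implicit Defensive.
Local Open Scope classical_set_scope.
Local Open Scope ring_scope.

Lemma le_small (R : realType) (x y : R) : (forall e, 0 < e -> x <= y + e) -> x <= y.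
Proof.
move=> H; rewrite leNgt; apply/negP => hxy.
have := H ((x - y) / 2); rewrite divr_gt0 ?subr_gt0 // => /(_ isT); lra.
Qed.

Lemma near_min (R : realType) (T : Type) (S : set T) (f : T -> R) (e : R) :
  0 < e -> (exists s, S s) -> (forall s, S s -> 0 <= f s) ->
  exists s, S s /\ forall s', S s' -> f s < f s' + e.
Proof.
move=> he [s0 hs0] hpos.
pose m := ereal_inf [set (f s)%:E | s in S].
have m0 : (0 <= m)%E by apply/ereal_infP => _ [s hs <-]; rewrite lee_fin hpos.
have m1 : (m <= (f s0)%:E)%E by apply: ereal_inf_lbound; exists s0.
have fm : m \is a fin_num.
  by rewrite fin_numE; apply/andP; split; apply/eqP => E; [move: m0 | move: m1]; rewrite E.
have : (m < m + e%:E)%E by rewrite -(fineK fm) -EFinD lte_fin ltrDl.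
move/ereal_inf_lt => [_ [s hs <-]] hlt; exists s; split => // s' hs'.
have : (m <= (f s')%:E)%E by apply: ereal_inf_lbound; exists s'.
move: hlt; rewrite -(fineK fm) -EFinD !lte_fin lee_fin; lra.
Qed.

Lemma near_max (R : realType) (T : Type) (S : set T) (f : T -> R) (e B : R) :
  0 < e -> (exists s, S s) -> (forall s, S s -> f s <= B) ->
  exists s, S s /\ forall s', S s' -> f s' < f s + e.
Proof.
move=> he hne hB.
have [s [hs H]] := near_min (f := fun s => B - f s) he hne (fun s hs => ltac:(rewrite subr_ge0; exact: hB s hs)).
exists s; split => // s' hs'; have := H s' hs'; lra.
Qed.

Fixpoint rec_seq (T : Type) (x0 : T) (st : T -> nat -> T) (n : nat) : T :=
  match n with 0 => x0 | n'.+1 => st (rec_seq x0 st n') n' end.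

Section Menger.
Variable R : realType.
Variable X : MetSp R.
Hypothesis hX : gen_metric X.
Hypothesis hc : complete_sp X.
Hypothesis hconv : convex X.
Variable x0 : X.
Local Notation d := (dist X).
Definition cp (a : X) := (d x0 a < +oo)%E.
Definition rd (a b : X) : R := fine (d a b).

Lemma cp_fin a b : cp a -> cp b -> d a b = (rd a b)%:E.
Proof.
move=> ha hb; rewrite /rd fineK //; apply/fin_numPlt; apply/andP; split.
  exact: lt_le_trans (ltNyr 0) (d_ge0 hX a b).
apply: le_lt_trans (d_tri hX a x0 b) _; rewrite (d_sym hX a x0).
move: ha hb; rewrite /cp; case: (d x0 a) => [r| |] //; case: (d x0 b) => [s| |] // _ _.
by rewrite -EFinD ltry.
Qed.

Lemma cp_le a b (c : R) : cp a -> (d a b <= c%:E)%E -> cp b.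
Proof.
move=> ha hab; rewrite /cp; apply: le_lt_trans (d_tri hX x0 a b) _.
move: ha hab; rewrite /cp; case: (d x0 a) => [r| |] //; case: (d a b) => [s| |] // _ _.
by rewrite -EFinD ltry.
Qed.

Lemma cp_x0 : cp x0.
Proof. by rewrite /cp d_refl // ltry. Qed.

Lemma rd_ge0 a b : 0 <= rd a b.
Proof. rewrite /rd; case: (d a b) (d_ge0 hX a b) => //. Qed.

Lemma rd_refl a : rd a a = 0.
Proof. by rewrite /rd d_refl. Qed.

Lemma rd_sym a b : rd a b = rd b a.
Proof. by rewrite /rd d_sym. Qed.

Lemma rd_tri a b c : cp a -> cp b -> cp c -> rd a c <= rd a b + rd b c.
Proof.
move=> ha hb hc'; have := d_tri hX a b c.
by rewrite (cp_fin ha hb) (cp_fin hb hc') (cp_fin ha hc') -EFinD lee_fin.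
Qed.

Lemma rd_eq0 a b : cp a -> cp b -> rd a b = 0 -> a = b.
Proof. by move=> ha hb h; apply: (d_eq0 hX); rewrite (cp_fin ha hb) h. Qed.

Lemma rd_pos a b : cp a -> cp b -> a <> b -> 0 < rd a b.
Proof.
move=> ha hb hne; rewrite lt_neqAle rd_ge0 andbT; apply/eqP => h.
by apply: hne; apply: (rd_eq0 ha hb); rewrite -h.
Qed.

Lemma rd_conv a b : cp a -> cp b -> a <> b ->
  exists z, [/\ cp z, z <> a, z <> b & rd a z + rd z b = rd a b].
Proof.
move=> ha hb hne; have [z [h1 h2 h3]] := hconv hne.
have hz : cp z.
  apply: (cp_le (c := rd a b) ha); rewrite -(cp_fin ha hb) -h3.
  rewrite -[X in (X <= _)%E]adde0; apply: leeD => //; exact: d_ge0.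
exists z; split => //; move: h3.
by rewrite (cp_fin ha hz) (cp_fin hz hb) (cp_fin ha hb) -EFinD => -[].
Qed.

Definition rcauchy (u : nat -> X) :=
  forall e : R, 0 < e -> exists N, forall m n, (N <= m)%N -> (N <= n)%N -> rd (u m) (u n) < e.
Definition rconv (u : nat -> X) l :=
  forall e : R, 0 < e -> exists N, forall n, (N <= n)%N -> rd (u n) l < e.

Lemma rcomplete u : (forall n, cp (u n)) -> rcauchy u -> exists l, cp l /\ rconv u l.
Proof.
move=> hu hcu.
have [l hl] : exists l, converges_to u l.
  apply: hc => e he; have [N hN] := hcu e he; exists N => m n hm hn.
  by rewrite (cp_fin (hu m) (hu n)) lte_fin; apply: hN.
have [N hN] := hl 1 ltr01.
have hcl : cp l by apply: (cp_le (c := 1) (hu N)); exact: ltW (hN N (leqnn N)).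
exists l; split => // e he; have [M hM] := hl e he; exists M => n hn.
by have := hM n hn; rewrite (cp_fin (hu n) hcl) lte_fin.
Qed.

Lemma btrans a p q b : cp a -> cp p -> cp q -> cp b ->
  rd a q + rd q p = rd a p -> rd a p + rd p b = rd a b ->
  rd a q + rd q b = rd a b /\ rd q p + rd p b = rd q b.
Proof.
move=> ha hp hq hb e1 e2.
have t1 := rd_tri ha hq hb; have t2 := rd_tri hq hp hb; split; lra.
Qed.

Lemma btw_closed a b u l n : (forall m, cp (u m)) -> cp a -> cp b -> cp l -> rconv u l ->
  (forall m, (n <= m)%N -> rd a (u m) + rd (u m) b = rd a b) -> rd a l + rd l b = rd a b.
Proof.
move=> hu ha hb hl hcv H; apply/eqP; rewrite eq_le rd_tri // andbT.
apply: le_small => e he; have he2 : 0 < e / 2 by rewrite divr_gt0.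
have [N hN] := hcv _ he2; pose m := maxn N n.
have h1 := hN m (leq_maxl _ _); have h2 := H m (leq_maxr _ _).
have t1 := rd_tri ha (hu m) hl; have t2 := rd_tri hl (hu m) hb.
rewrite (rd_sym l (u m)) in t2; lra.
Qed.

Lemma eps_pos n : 0 < (n.+1%:R : R)^-1.
Proof. by rewrite invr_gt0 ltr0n. Qed.

Lemma small_step z y r : cp z -> cp y -> z <> y -> 0 < r ->
  exists ws, [/\ cp ws, ws <> z, rd z ws + rd ws y = rd z y & rd z ws < r].
Proof.
move=> hz hy hzy hr.
case: (pselect (exists ws, [/\ cp ws, ws <> z, rd z ws + rd ws y = rd z y & rd z ws < r])) => // nH.
exfalso.
have H ws : cp ws -> ws <> z -> rd z ws + rd ws y = rd z y -> r <= rd z ws.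
  move=> h1 h2 h3; rewrite leNgt; apply/negP => h4; apply: nH; exists ws; by split.
pose eps n := (n.+1%:R : R)^-1.
pose S (p : X) := [set ws | cp ws /\ ws <> z /\ rd z ws + rd ws p = rd z p].
have step (pn : X * nat) : exists w', (cp pn.1 /\ pn.1 <> z) ->
    S pn.1 w' /\ forall w'', S pn.1 w'' -> rd z w' < rd z w'' + eps pn.2.
  case: pn => p n /=; case: (pselect (cp p /\ p <> z)) => [[hp hpz]|nh]; last by exists p.
  have hSp : exists s, S p s by exists p; split => //; split => //; rewrite rd_refl addr0.
  have [ww [hw H']] := near_min (f := rd z) (S := S p) (eps_pos n) hSp (fun _ _ => rd_ge0 _ _).
  by exists ww.
have [st hst] := choice step.
pose ws := rec_seq y (fun p n => st (p, n)).
have wS n : ws n.+1 = st (ws n, n) by [].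
have inv n : S y (ws n).
  elim: n => [|n [IH1 [IH2 IH3]]].
    change (S y y); rewrite /S /=; split => //; split; [exact: nesym | by rewrite rd_refl addr0].
  have [[h1 [h2 h3]] _] := hst (ws n, n) (conj IH1 IH2).
  rewrite /= -wS in h1 h2 h3.
  split => //; split => //; exact: (btrans hz IH1 h1 hy h3 IH3).1.
have chain n k : rd z (ws (n + k)%N) + rd (ws (n + k)%N) (ws n) = rd z (ws n).
  elim: k => [|k IH]; first by rewrite addn0 rd_refl addr0.
  have [IH1 [IH2 _]] := inv (n + k)%N; have [[h1 [h2 h3]] _] := hst (ws (n + k)%N, (n + k)%N) (conj IH1 IH2).
  rewrite /= -wS in h1 h2 h3; rewrite addnS.
  exact: (btrans hz IH1 h1 (inv n).1 h3 IH).1.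
have near n m : (n < m)%N -> rd (ws m) (ws n.+1) < eps n.
  move=> hnm; have [IH1 [IH2 _]] := inv n.
  have [_ h] := hst (ws n, n) (conj IH1 IH2).
  have hm : S (ws n) (ws m).
    have [q1 [q2 _]] := inv m; split => //; split => //.
    by have := chain n (m - n)%N; rewrite subnKC // ltnW.
  have := h _ hm; rewrite /= -wS => hlt.
  have := chain n.+1 (m - n.+1)%N; rewrite subnKC //; lra.
have wcp n : cp (ws n) by case: (inv n).
have [l [hl hcv]] : exists l, cp l /\ rconv ws l.
  apply: rcomplete => // e he; have he2 : 0 < e / 2 by rewrite divr_gt0.
  have [N hN] := small_inv he2; exists N.+1 => m m' hm hm'.
  have t := rd_tri (wcp m) (wcp N.+1) (wcp m').
  have a1 := near N m hm; have a2 := near N m' hm'; rewrite rd_sym in a2.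
  move: (hN N (leqnn N)) => hq; apply: le_lt_trans t _; rewrite (splitr e); apply: ltrD; exact: lt_trans hq.
have closed n : rd z l + rd l (ws n) = rd z (ws n).
  apply: (btw_closed (n := n)) => // m hm; have := chain n (m - n)%N; by rewrite subnKC.
have hlz : l <> z.
  move=> E; subst l; have [N hN] := hcv r hr; have [q1 [q2 q3]] := inv N.
  have := H _ q1 q2 q3; rewrite rd_sym; have := hN N (leqnn N); lra.
have [w' [hw1 hw2 hw3 hw4]] := rd_conv hz hl (nesym hlz).
have hpos := rd_pos hw1 hl hw3.
have [N hN] := small_inv hpos.
have [IH1 [IH2 _]] := inv N; have [_ h] := hst (ws N, N) (conj IH1 IH2).
have hw' : S (ws N) w'.
  split => //; split => //; exact: (btrans hz hl hw1 IH1 hw4 (closed N)).1.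
have hlt : rd z (ws N.+1) < rd z w' + eps N := h _ hw'.
have hq : eps N < rd w' l := hN N (leqnn N).
have := closed N.+1; have := rd_ge0 l (ws N.+1); lra.
Qed.

Lemma btrans2 a p q b : cp a -> cp p -> cp q -> cp b ->
  rd a p + rd p b = rd a b -> rd p q + rd q b = rd p b ->
  rd a q + rd q b = rd a b /\ rd a p + rd p q = rd a q.
Proof.
move=> ha hp hq hb e1 e2.
have t1 := rd_tri ha hq hb; have t2 := rd_tri ha hp hq; split; lra.
Qed.

Lemma reach x y t : cp x -> cp y -> 0 <= t -> t <= rd x y ->
  exists z, [/\ cp z, rd x z + rd z y = rd x y & rd x z = t].
Proof.
move=> hx hy ht0 ht.
pose eps n := (n.+1%:R : R)^-1.
pose S (p : X) := [set w | cp w /\ rd p w + rd w y = rd p y /\ rd x w <= t].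
have step (pn : X * nat) : exists w', (cp pn.1 /\ rd x pn.1 <= t) ->
    S pn.1 w' /\ forall w'', S pn.1 w'' -> rd pn.1 w'' < rd pn.1 w' + eps pn.2.
  case: pn => p n /=; case: (pselect (cp p /\ rd x p <= t)) => [[hp hpt]|nh]; last by exists p.
  have hSp : exists s, S p s by exists p; split => //; split => //; rewrite rd_refl add0r.
  have hB : forall s, S p s -> rd p s <= rd p y.
    by move=> s [_ [e _]]; have := rd_ge0 s y; lra.
  have [ww [hw H']] := near_max (f := rd p) (S := S p) (eps_pos n) hSp hB.
  by exists ww.
have [st hst] := choice step.
pose zs := rec_seq x (fun p n => st (p, n)).
have zS n : zs n.+1 = st (zs n, n) by [].
have inv n : [/\ cp (zs n), rd x (zs n) + rd (zs n) y = rd x y & rd x (zs n) <= t].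
  elim: n => [|n [IH1 IH2 IH3]].
    by change (zs 0%N) with x; split => //; rewrite ?rd_refl ?add0r.
  have [[h1 [h2 h3]] _] := hst (zs n, n) (conj IH1 IH3).
  rewrite /= -zS in h1 h2 h3.
  split => //; exact: (btrans2 hx IH1 h1 hy IH2 h2).1.
have zcp n : cp (zs n) by case: (inv n).
have chain n k : rd (zs n) (zs (n + k)%N) + rd (zs (n + k)%N) y = rd (zs n) y.
  elim: k => [|k IH]; first by rewrite addn0 rd_refl add0r.
  have [IH1 IH2 IH3] := inv (n + k)%N; have [[h1 [h2 h3]] _] := hst (zs (n + k)%N, (n + k)%N) (conj IH1 IH3).
  rewrite /= -zS in h1 h2 h3; rewrite addnS.
  exact: (btrans2 (zcp n) IH1 h1 hy IH h2).1.
have addv n m : (n <= m)%N -> rd x (zs n) + rd (zs n) (zs m) = rd x (zs m).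
  move=> hnm; have := chain n (m - n)%N; rewrite subnKC // => h.
  have [q1 q2 _] := inv n; exact: (btrans2 hx q1 (zcp m) hy q2 h).2.
have near n m : (n < m)%N -> rd (zs n.+1) (zs m) < eps n.
  move=> hnm; have [IH1 IH2 IH3] := inv n.
  have [_ h] := hst (zs n, n) (conj IH1 IH3).
  have hm : S (zs n) (zs m).
    have [q1 _ q3] := inv m; split => //; split => //.
    by have := chain n (m - n)%N; rewrite subnKC // ltnW.
  have hlt : rd (zs n) (zs m) < rd (zs n) (zs n.+1) + eps n := h _ hm.
  have a1 := addv n m (ltnW hnm); have a2 := addv n.+1 m hnm; have a3 := addv n n.+1 (leqnSn n).
  lra.
have [z [hz hcv]] : exists z, cp z /\ rconv zs z.
  apply: rcomplete => // e he; have he2 : 0 < e / 2 by rewrite divr_gt0.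
  have [N hN] := small_inv he2; exists N.+1 => m m' hm hm'.
  have t0 := rd_tri (zcp m) (zcp N.+1) (zcp m').
  have a1 := near N m hm; have a2 := near N m' hm'; rewrite rd_sym in a1.
  move: (hN N (leqnn N)) => hq; apply: le_lt_trans t0 _; rewrite (splitr e); apply: ltrD; exact: lt_trans hq.
have closed n : rd (zs n) z + rd z y = rd (zs n) y.
  apply: (btw_closed (n := n)) => // m hm; have := chain n (m - n)%N; by rewrite subnKC.
have closed0 : rd x z + rd z y = rd x y := closed 0%N.
have hzt : rd x z <= t.
  apply: le_small => e he; have [N hN] := hcv e he.
  have t0 := rd_tri hx (zcp N) hz; have := hN N (leqnn N); have [_ _ q] := inv N; lra.
case: (eqVneq (rd x z) t) => [E|hne]; first by exists z.
have hlt : rd x z < t by rewrite lt_neqAle hne hzt.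
have hzy : z <> y.
  by move=> E; subst z; move: hlt; rewrite rd_refl addr0 in closed0; lra.
have hr : 0 < t - rd x z by rewrite subr_gt0.
have [w [hw1 hw2 hw3 hw4]] := small_step hz hy hzy hr.
have hcw := rd_pos hz hw1 (nesym hw2).
have hc2 : 0 < rd z w / 2 by rewrite divr_gt0.
have [N hN] := small_inv hc2.
have [IH1 _ IH3] := inv N.+1; have [_ h] := hst (zs N.+1, N.+1) (conj IH1 IH3).
have [b1 b2] := btrans2 (zcp N.+1) hz hw1 hy (closed N.+1) hw3.
have [b3 b4] := btrans2 hx hz hw1 hy closed0 hw3.
have hS : S (zs N.+1) w by split => //; split => //; lra.
have hlt2 : rd (zs N.+1) w < rd (zs N.+1) (zs N.+2) + eps N.+1 := h _ hS.
have hn1 : rd (zs N.+1) (zs N.+2) < eps N := near N N.+2 (ltnW (ltnSn _)).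
have q1 : eps N < rd z w / 2 := hN N (leqnn N).
have q2 : eps N.+1 < rd z w / 2 := hN N.+1 (leqnSn N).
have := rd_ge0 (zs N.+1) z; lra.
Qed.

End Menger.
Arguments cp {R X}.
Arguments rd {R X}.
Arguments cp_fin {R X} hX {x0}.
Arguments reach {R X} hX hc hconv {x0}.

End W6.
Import W6.

Module W7.
Set Implicit Arguments. Unset Strict Implicit. Unset Printing Implicit Defensive.
Local Open Scope classical_set_scope.
Local Open Scope ring_scope.
Local Open Scope ereal_scope.

Lemma eadd_lt (R : realType) (u v : \bar R) (p q : R) :
  u < p%:E -> v <= q%:E -> 0 <= v -> u + v < (p + q)%:E.
Proof.
move=> h1 h2 h3.
have fv : v \is a fin_num.
  by rewrite fin_numE; apply/andP; split; apply/eqP => E; [move: h3 | move: h2]; rewrite E.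
by rewrite EFinD; apply: lte_leD.
Qed.

Lemma eadd_lt' (R : realType) (u v : \bar R) (p q : R) :
  u <= p%:E -> v < q%:E -> 0 <= u -> u + v < (p + q)%:E.
Proof. by move=> h1 h2 h3; rewrite addeC (addrC p q); apply: eadd_lt. Qed.

Local Unset Implicit Arguments.
Section Main.
Variables (R : realType) (delta : R) (hdelta : (0 < delta)%R).
Variables (I : Type) (le : I -> I -> Prop) (hI : directed_poset le).
Variables (D : I -> MetSp R) (F : forall i j, le i j -> D i -> D j).
Hypothesis hD : forall i, cmet (D i).
Hypothesis hconv : forall i, convex (D i).
Hypothesis hFiso : forall i j (h : le i j), isometric (F i j h).
Hypothesis hFcomp : forall i j k (hij : le i j) (hjk : le j k) (hik : le i k) (x : D i),
     F j k hjk (F i j hij x) = F i k hik x.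
Variables (K : MetSp R) (k : forall i, D i -> K) (hk : forall i, nonexp (k i)).
Hypothesis hcolim : is_colimit F k.

Local Notation H := (hom_sp (two_sp delta) K).
Local Notation HD i := (hom_sp (two_sp delta) (D i)).
Definition kh i : HD i -> H := hom_map (A:=two_sp delta) (hk i).

Lemma hDg i : gen_metric (D i). Proof. by case: (hD i). Qed.
Lemma hKg : gen_metric K. Proof. by case: (K_cmet hcolim). Qed.

Lemma hom_approx (f : H) (e : R) : (0 < e)%R ->
  exists i (g : HD i), dist H (kh i g) f < e%:E.
Proof.
move=> he; have he4 : (0 < e / 4)%R by rewrite divr_gt0.
set a := sval f true; set b := sval f false.
have hab : dist K a b <= delta%:E := hom_pair_le f.
have [i1 [x1 h1]] := density hcolim a (e / 4) he4.
have [i2 [x2 h2]] := density hcolim b (e / 4) he4.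
have [m [hm1 hm2]] := dir hI i1 i2.
set x := F i1 m hm1 x1; set z := F i2 m hm2 x2.
have kx : k m x = k i1 x1 := k_compat hcolim i1 m hm1 x1.
have kz : k m z = k i2 x2 := k_compat hcolim i2 m hm2 x2.
have hdxz : dist (D m) x z = dist K (k m x) (k m z) by rewrite (k_iso hI hDg hFiso hFcomp _ _ hcolim).
have bnd : dist (D m) x z < (e / 4 + (delta + e / 4))%:E.
  rewrite hdxz kx kz; apply: le_lt_trans (d_tri hKg _ a _) _.
  apply: le_lt_trans (leeD (lexx _) (d_tri hKg a b _)) _.
  apply: eadd_lt; first exact: h1.
    rewrite EFinD; apply: leeD => //; apply: ltW; by rewrite (d_sym hKg).
  by rewrite adde_ge0 // (d_ge0 hKg).
have hg (y : D m) : dist (D m) x y <= delta%:E -> dist K (k m y) b < (e / 4 * 3)%:E ->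
    exists i (g : HD i), dist H (kh i g) f < e%:E.
  move=> hxy hyb; exists m, (exist _ _ (two_nonexp_mk (hDg m) hxy)).
  apply: hd_lt2 => /=.
    rewrite kx; apply: lt_trans h1 _; rewrite lte_fin; lra.
  apply: lt_trans hyb _; rewrite lte_fin; lra.
case: (leP (dist (D m) x z) delta%:E) => hle.
  apply: (hg z hle); rewrite kz; apply: lt_trans h2 _; rewrite lte_fin; lra.
have hDm := hDg m.
have cx : cp x x by rewrite /cp (d_refl hDm) ltry.
have cz : cp x z by rewrite /cp; apply: lt_trans bnd _; exact: ltry.
have fxz := cp_fin hDm _ _ cx cz.
rewrite fxz lte_fin in hle bnd.
have [w [cw hw1 hw2]] := reach hDm (hD m).2 (hconv m) x z delta cx cz (ltW hdelta) (ltW hle).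
apply: (hg w).
  by rewrite (cp_fin hDm _ _ cx cw) hw2.
apply: le_lt_trans (d_tri hKg _ (k m z) _) _.
rewrite (k_iso hI hDg hFiso hFcomp _ _ hcolim) (cp_fin hDm _ _ cw cz) kz.
have -> : (e / 4 * 3 = (rd w z) + (e / 4 * 3 - (rd w z)))%R by lra.
apply: eadd_lt' => //; last by rewrite lee_fin rd_ge0.
apply: lt_le_trans h2 _; rewrite lee_fin; rewrite lte_fin in bnd; lra.
Qed.

Definition Fh i j (h : le i j) : HD i -> HD j :=
  hom_map (A:=two_sp delta) (isometric_nonexp (hFiso i j h)).

Lemma kh_compat i j (h : le i j) (g : HD i) : kh j (Fh i j h g) = kh i g.
Proof. apply: hom_eq => x /=; exact: (k_compat hcolim). Qed.

Lemma hHg : gen_metric H. Proof. exact: hom_gen hKg. Qed.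

Lemma kh_iso i : isometric (kh i).
Proof. apply: hom_map_iso; exact: (k_iso hI hDg hFiso hFcomp _ _ hcolim). Qed.

Lemma hL_diam (L : MetSp R) (l : forall i, HD i -> L) (hl : forall i, nonexp (l i))
  (hlc : forall i j (h : le i j) (g : HD i), l j (Fh i j h g) = l i g) i j (g : HD i) (g' : HD j) :
  dist L (l i g) (l j g') <= dist H (kh i g) (kh j g').
Proof.
have [m [hi hj]] := dir hI i j.
rewrite -(hlc i m hi g) -(hlc j m hj g'); apply: le_trans (hl m _ _) _.
by rewrite -(kh_iso m) !kh_compat.
Qed.

Lemma kh_near (f : H) i j (g : HD i) (g' : HD j) (e e' : R) :
  dist H (kh i g) f < e%:E -> dist H (kh j g') f < e'%:E ->
  dist H (kh i g) (kh j g') <= (e + e')%:E.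
Proof.
move=> h1 h2; apply: le_trans (d_tri hHg _ f _) _; rewrite EFinD.
apply: leeD; first exact: ltW.
by rewrite (d_sym hHg); exact: ltW.
Qed.

Lemma main_colim :
  is_colimit (fun i j (h : le i j) => hom_map (A:=two_sp delta) (isometric_nonexp (hFiso i j h)))
    (fun i => hom_map (A:=two_sp delta) (hk i)).
Proof.
split.
- split; [exact: hHg | exact: hom_complete (K_cmet hcolim)].
- move=> i; exact: hom_map_nonexp.
- move=> i j h g; exact: kh_compat.
move=> L hL l hl hlc.
have hLg : gen_metric L by case: hL.
pose S (f : H) (e : R) : set L := [set p | exists i (g : HD i), dist H (kh i g) f < e%:E /\ p = l i g].
have ex f : exists c, forall (e : R) p, (0 < e)%R -> S f e p -> dist L p c <= e%:E.
  apply: (@complete_approx R L hL (S f)).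
    move=> e he; have [i [g hg]] := hom_approx f e he; exists (l i g); exists i, g; by split.
  move=> e e' p q he he' [i [g [hg ->]]] [j [g' [hg' ->]]].
  apply: le_trans (hL_diam L l hl hlc i j g g') _; exact: kh_near hg hg'.
have [u hu] := choice ex.
have hukh i (g : HD i) : u (kh i g) = l i g.
  apply: esym; apply: (d_small_eq hLg) => e he; apply: hu => //.
  by exists i, g; split => //; rewrite (d_refl hHg).
exists u; split.
- move=> f f'; apply/lee_addgt0Pr => eta heta.
  have he : (0 < eta / 4)%R by rewrite divr_gt0.
  have [i [g hg]] := hom_approx f _ he; have [j [g' hg']] := hom_approx f' _ he.
  have a1 : dist L (u f) (l i g) <= (eta / 4)%:E.
    rewrite (d_sym hLg); apply: hu => //; by exists i, g.
  have a3 : dist L (l j g') (u f') <= (eta / 4)%:E.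
    apply: hu => //; by exists j, g'.
  have a2 : dist L (l i g) (l j g') <= (eta / 4)%:E + (dist H f f' + (eta / 4)%:E).
    apply: le_trans (hL_diam L l hl hlc i j g g') _.
    apply: le_trans (d_tri hHg _ f _) _; apply: leeD; first exact: ltW.
    apply: le_trans (d_tri hHg _ f' _) _; apply: leeD => //.
    by rewrite (d_sym hHg); exact: ltW.
  have t1 := d_tri hLg (u f) (l i g) (u f').
  have t2 := d_tri hLg (l i g) (l j g') (u f').
  have tot := le_trans t1 (leeD a1 (le_trans t2 (leeD a2 a3))).
  apply: le_trans tot _.
  have := d_ge0 hHg f f'; case: (dist H f f') => [r| |] // hr.
    rewrite -!EFinD lee_fin; lra.
- move=> i g; exact: hukh.
- move=> u' hu' hu'1 f; apply: (d_small_eq hLg) => eta heta.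
  have he : (0 < eta / 2)%R by rewrite divr_gt0.
  have [i [g hg]] := hom_approx f _ he.
  apply: le_trans (d_tri hLg _ (u' (kh i g)) _) _.
  rewrite (splitr eta) EFinD; apply: leeD.
    apply: le_trans (hu' _ _) _; rewrite (d_sym hHg); exact: ltW.
  rewrite hu'1; apply: hu => //; by exists i, g.
Qed.

End Main.

End W7.
Import W7.

Local Open Scope ring_scope.

Theorem mainTheorem18 (R : realType) (delta : R) (hdelta : 0 < delta)
  (I : Type) (le : I -> I -> Prop) (hI : directed_poset le)
  (D : I -> MetSp R) (F : forall i j, le i j -> D i -> D j)
  (hD : forall i, cmet (D i)) (hconv : forall i, convex (D i))
  (hFiso : forall i j (h : le i j), isometric (F i j h))
  (hFid : forall i (h : le i i) (x : D i), F i i h x = x)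
  (hFcomp : forall i j k (hij : le i j) (hjk : le j k) (hik : le i k) (x : D i),
     F j k hjk (F i j hij x) = F i k hik x)
  (K : MetSp R) (k : forall i, D i -> K) (hk : forall i, nonexp (k i))
  (hcolim : is_colimit F k) :
  is_colimit
    (fun i j (h : le i j) =>
       hom_map (A:=two_sp delta) (isometric_nonexp (hFiso i j h)))
    (fun i => hom_map (A:=two_sp delta) (hk i)).
Proof.
exact: (main_colim R delta hdelta I le hI D F hD hconv hFiso hFcomp K k hk hcolim).
Qed.
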